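(* If $T$ is a subcubic tree of order $n$, then $\frac{2n}{3}\le \psi(T)\le \frac{4n+2}{5}$. Moreover, both bounds are tight, i.e., each bound is attained with equality by some subcubic trees.
   Context: All graphs are finite, simple and undirected. A subcubic tree is a tree of maximum degree at most $3$. A dissociation set in a graph $G$ is a vertex subset $F$ such that the induced subgraph $G[F]$ has maximum degree at most $1$; the dissociation number $\psi(G)$ is the maximum cardinality of a dissociation set of $G$. *)

(* Defs.v *)
From mathcomp Require Import all_boot.
Set Implicit Arguments. Unset Strict Implicit. Unset Printing Implicit Defensive.

Definition simple_graph (T : finType) (e : rel T) : Prop :=
  symmetric e /\ irreflexive e.

Definition nbhd (T : finType) (e : rel T) (x : T) : {set T} := [set y | e x y].
Definition deg (T : finType) (e : rel T) (x : T) : nat := #|nbhd e x|.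

(* number of edges: each unordered edge counted twice among ordered pairs *)
Definition nedges (T : finType) (e : rel T) : nat :=
  #|[set p : T * T | e p.1 p.2]| %/ 2.

Definition is_tree (T : finType) (e : rel T) : Prop :=
  simple_graph e /\ 0 < #|T| /\ (forall x y : T, connect e x y)
  /\ nedges e = #|T|.-1.

Definition subcubic (T : finType) (e : rel T) : Prop :=
  forall x : T, deg e x <= 3.

Definition subcubic_tree (T : finType) (e : rel T) : Prop :=
  is_tree e /\ subcubic e.

Definition dissociation_set (T : finType) (e : rel T) (F : {set T}) : bool :=
  [forall x in F, #|nbhd e x :&: F| <= 1].

Definition diss_number (T : finType) (e : rel T) : nat :=
  \max_(F : {set T} | dissociation_set e F) #|F|.

(* Main.v *)
Require Import Defs.
From mathcomp Require Import all_boot zify.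
Set Implicit Arguments. Unset Strict Implicit. Unset Printing Implicit Defensive.

Lemma card_I3 (P : pred nat) : #|[set y : 'I_3 | P y]| = count P (iota 0 3).
Proof.
rewrite cardsE cardE /enum_mem size_filter -val_enum_ord count_map.
by rewrite enumT.
Qed.
Lemma s3 (g : nat -> nat) : \sum_(i < 3) g i = g 0 + g 1 + g 2.
Proof. by rewrite !big_ord_recr big_ord0. Qed.

Section G.
Variables (T : finType) (e : rel T).

Definition pairs (P : pred (T*T)) := [set p : T * T | e p.1 p.2 && P p].

Lemma sum_pairs (A B : {set T}) :
  #|pairs (fun p => (p.1 \in A) && (p.2 \in B))| = \sum_(x in A) #|nbhd e x :&: B|.
Proof.
rewrite -sum1_card.
rewrite (eq_bigr (fun x => \sum_(y in nbhd e x :&: B) 1)); last by move=> x _; rewrite sum1_card.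
rewrite pair_big_dep; apply: eq_bigl => -[x y] /=.
by rewrite !inE /=; case: (x \in A); case: (y \in B); case: (e x y).
Qed.

Lemma sum_pairs1 (A : {set T}) :
  #|pairs (fun p => (p.1 \in A))| = \sum_(x in A) deg e x.
Proof.
have -> : pairs (fun p => (p.1 \in A)) = pairs (fun p => (p.1 \in A) && (p.2 \in setT)).
  by apply/setP => p; rewrite !inE andbT.
rewrite sum_pairs; apply: eq_bigr => x _; by rewrite setIT.
Qed.

Hypothesis esym : symmetric e.
Hypothesis eirr : irreflexive e.

Lemma sum_pairs2 (A : {set T}) :
  #|pairs (fun p => (p.2 \in A))| = #|pairs (fun p => (p.1 \in A))|.
Proof.
have inj : injective (fun p : T * T => (p.2, p.1)) by move=> [a b] [c d] [-> ->].
rewrite -(card_preimset _ inj); congr #|pred_of_set _|.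
by apply/setP => -[x y]; rewrite !inE /= esym.
Qed.

Lemma upper (F : {set T}) : dissociation_set e F -> subcubic e ->
  #|pairs predT| <= #|F| + 6 * #|~: F|.
Proof.
move=> /forallP dF sc.
have sub : pairs predT \subset pairs (fun p => (p.1 \in F) && (p.2 \in F))
   :|: pairs (fun p => (p.1 \in ~: F)) :|: pairs (fun p => (p.2 \in ~: F)).
  apply/subsetP => -[x y]; rewrite !inE /= andbT => ->.
  by case: (x \in F); case: (y \in F).
apply: (leq_trans (subset_leq_card sub)).
apply: (leq_trans (leq_card_setU _ _)).
rewrite sum_pairs2.
have h1 := leq_card_setU (pairs (fun p => (p.1 \in F) && (p.2 \in F))) (pairs (fun p => (p.1 \in ~: F))).
have h2 : #|pairs (fun p => (p.1 \in F) && (p.2 \in F))| <= #|F|.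
  rewrite sum_pairs -sum1_card; apply: leq_sum => x xF.
  by have := dF x; rewrite xF.
have h3 : #|pairs (fun p => (p.1 \in ~: F))| <= 3 * #|~: F|.
  rewrite sum_pairs1 -sum1_card big_distrr /=; apply: leq_sum => x _.
  by rewrite muln1.
case: h1 => h1 _; lia.
Qed.


Lemma cross (conn : forall x y, connect e x y) k : forall A : {set T},
  A != set0 -> #|~: A| = k ->
  2 * k <= #|pairs (fun p => ~~ ((p.1 \in A) && (p.2 \in A)))|.
Proof.
elim: k => [//|k IH] A An0 cA.
have [x xnA] : exists x, x \in ~: A by apply/card_gt0P; rewrite cA.
have [a aA] : exists a, a \in A by apply/set0Pn.
have [[y z] /= yz | none] := pickP [pred p : T * T | e p.1 p.2 && (p.1 \in A) && (p.2 \notin A)]; last first.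
  have cl : closed e (mem A).
    move=> y z eyz /=.
    case yA: (y \in A); case zA: (z \in A) => //.
      by have := none (y, z); rewrite /= eyz yA zA.
    by have := none (z, y); rewrite /= esym eyz yA zA.
  have := closed_connect cl (conn x a).
  by rewrite !inE in xnA *; rewrite (negbTE xnA) aA.
move: yz => /andP[/andP[eyz yA] znA].
have A'n0 : z |: A != set0 by apply/set0Pn; exists z; rewrite !inE eqxx.
have cA' : #|~: (z |: A)| = k.
  move: cA; rewrite (cardsD1 z (~: A)) inE znA add1n => -[<-].
  by congr #|pred_of_set _|; apply/setP => w; rewrite !inE negb_or andbC.
have := IH _ A'n0 cA'.
set Q := pairs _.
have yz : y != z by apply: contraNneq znA => <-.
have sub : (y, z) |: ((z, y) |: Q) \subset pairs (fun p => ~~ ((p.1 \in A) && (p.2 \in A))).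
  apply/subsetP => -[p q]; rewrite !inE /= => /orP[/eqP[-> ->]|/orP[/eqP[-> ->]|]].
  - by rewrite eyz (negbTE znA) andbF.
  - by rewrite esym eyz (negbTE znA).
  - move=> /andP[-> /=]; apply: contra => /andP[-> ->]; by rewrite !orbT.
have := subset_leq_card sub.
rewrite cardsU1 cardsU1 !inE /= !xpair_eqE eqxx (negbTE yz) /=.
rewrite [e z y]esym eyz yA /=.
move=> h1 h2; lia.
Qed.

Definition hered := forall S : {set T}, S != set0 -> exists2 u, u \in S & #|nbhd e u :&: S| <= 1.

Lemma tree_hered : is_tree e -> hered.
Proof.
move=> [_ [n0 [conn ned]]] S Sn0.
case: (pickP [pred u | (u \in S) && (#|nbhd e u :&: S| <= 1)]) => [u /andP[] | none].
  by exists u.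
exfalso.
have h1 : 2 * #|S| <= #|pairs (fun p => (p.1 \in S) && (p.2 \in S))|.
  rewrite sum_pairs -sum1_card big_distrr /=; apply: leq_sum => x xS.
  have := none x; rewrite /= xS /= muln1; by case: ltngtP.
have h2 := cross conn Sn0 (erefl _).
have h3 : #|pairs (fun p => (p.1 \in S) && (p.2 \in S))| +
          #|pairs (fun p => ~~ ((p.1 \in S) && (p.2 \in S)))| = #|pairs predT|.
  rewrite -(cardsID (pairs (fun p => (p.1 \in S) && (p.2 \in S))) (pairs predT)).
  have -> : pairs predT :&: pairs (fun p => (p.1 \in S) && (p.2 \in S)) = pairs (fun p => (p.1 \in S) && (p.2 \in S)).
    by apply/setP => p; rewrite !inE; case: (e _ _).
  have -> : pairs predT :\: pairs (fun p => (p.1 \in S) && (p.2 \in S)) = pairs (fun p => ~~ ((p.1 \in S) && (p.2 \in S))).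
    by apply/setP => p; rewrite !inE; case: (e _ _); case: (_ \in S); case: (_ \in S).
  by [].
have h4 : pairs predT = [set p : T * T | e p.1 p.2].
  by apply/setP => p; rewrite !inE andbT.
move: ned; rewrite /nedges -h4 => ned.
have := cardsC S.
lia.
Qed.

Hypothesis sc : subcubic e.

Definition goodS (S : {set T}) :=
  exists F : {set T}, [/\ F \subset S, dissociation_set e F & 2 * #|S| <= 3 * #|F|].

Lemma combine (S X Z : {set T}) u :
  X \subset S -> Z \subset X -> u \in X ->
  (forall z x, z \in Z -> x \in S :\: X -> ~~ e z x) ->
  (forall z, z \in Z -> #|nbhd e z :&: Z| <= 1) ->
  2 * #|X| <= 3 * #|Z| ->
  goodS (S :\: X) -> goodS S.
Proof.
move=> XS ZX uX noe dZ cZ [F' [F'S dF' cF']].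
have ZF'0 : forall z, z \in Z -> z \notin F'.
  move=> z zZ; apply/negP => /(subsetP F'S); rewrite inE (subsetP ZX _ zZ) //.
exists (F' :|: Z); split.
- rewrite subUset (subset_trans F'S (subsetDl _ _)) /=.
  exact: subset_trans ZX XS.
- apply/forallP => x; apply/implyP; rewrite inE => /orP[xF'|xZ].
    have := forallP dF' x; rewrite xF' /= => h; apply: leq_trans h.
    apply: subset_leq_card; apply/subsetP => y; rewrite !inE => /andP[exy /orP[->|yZ]].
      by rewrite exy.
    by have := noe y x yZ (subsetP F'S _ xF'); rewrite esym exy.
  apply: leq_trans (dZ x xZ); apply: subset_leq_card; apply/subsetP => y.
  rewrite !inE => /andP[exy /orP[yF'|->]]; last by rewrite exy.
  by have := noe x y xZ (subsetP F'S _ yF'); rewrite exy.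
- have h1 : #|F' :|: Z| = #|F'| + #|Z|.
    rewrite cardsU; suff -> : F' :&: Z = set0 by rewrite cards0 subn0.
    apply/setP => y; rewrite !inE; apply/negP => /andP[yF' yZ].
    by have := ZF'0 y yZ; rewrite yF'.
  have h2 := cardsID X S.
  have h3 : S :&: X = X by apply/setIidPr.
  rewrite h3 in h2.
  rewrite h1; lia.
Qed.


Lemma lower (hd : hered) : forall S, goodS S.
Proof.
move=> S; have [n] := ubnP #|S|; elim: n S => // n IH S cS.
case: (boolP [forall x in S, #|nbhd e x :&: S| <= 1]) => [dS|].
  by exists S; split => //; lia.
move=> /forallPn[w]; rewrite negb_imply => /andP[wS wdeg].
set L := [set x in S | #|nbhd e x :&: S| <= 1].
have SLn0 : S :\: L != set0 by apply/set0Pn; exists w; rewrite !inE wS /= andbT.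
have [u uSL udeg] := hd _ SLn0.
move: uSL; rewrite !inE => /andP[udeg2 uS]; rewrite uS /= -ltnNge in udeg2.
set A := nbhd e u :&: S.
set Y := A :&: L.
have A3 : #|A| <= 3 by apply: leq_trans (sc u); apply: subset_leq_card; apply: subsetIl.
have AY : #|A| <= #|Y| + 1.
  rewrite -(cardsID L A); have -> : A :\: L = nbhd e u :&: (S :\: L).
    by apply/setP => x; rewrite !inE andbCA.
  by apply: leq_add.
have AS : A \subset S by apply: subsetIr.
have uA : u \notin A by rewrite !inE eirr.
have Yleaf : forall y x, y \in Y -> x \in S -> e y x -> x = u.
  move=> y x; rewrite !inE => /andP[/andP[euy yS] /andP[_ ydeg]] xS eyx.
  move: ydeg => /card_le1_eqP H; have := H x u; rewrite !inE eyx xS esym euy uS. by move=> ->.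
have smaller : forall X : {set T}, u \in X -> #|S :\: X| < n.
  move=> X uX; rewrite cardsD; have : 0 < #|S :&: X|.
    by apply/card_gt0P; exists u; rewrite inE uS.
  have : #|S :&: X| <= #|S| by apply: subset_leq_card; apply: subsetIl.
  lia.
have YA : Y \subset A by apply: subsetIl.
case: (leqP 2 #|Y|) => Y2.
  apply: (combine (X := u |: Y) (Z := Y) (u := u)).
  - by rewrite subUset sub1set uS (subset_trans YA AS).
  - by apply: subsetUr.
  - by rewrite !inE eqxx.
  - move=> z x zY; rewrite !inE negb_or => /andP[/andP[xu _] xS].
    by apply/negP => ezx; move: xu; rewrite (Yleaf z x zY xS ezx) eqxx.
  - move=> z zY; apply: leq_trans (_ : #|nbhd e z :&: S| <= 1).
      by apply: subset_leq_card; apply: setIS; apply: subset_trans YA AS.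
    by move: zY; rewrite !inE => /andP[_ /andP[]].
  - rewrite cardsU1 (_ : u \notin Y) /=; first lia.
    by apply: contra uA; apply/subsetP.
  - by apply: IH; apply: smaller; rewrite !inE eqxx.
have A2 : 1 < #|A| by exact: udeg2.
have [v vY] : exists v, v \in Y by apply/card_gt0P; lia.
have vA : v \in A by apply: (subsetP YA).
have uv : u != v by apply: contraNneq uA => ->.
apply: (combine (X := u |: A) (Z := [set u; v]) (u := u)).
- by rewrite subUset sub1set uS AS.
- by rewrite subUset !sub1set setU11 setU1r.
- by rewrite !inE eqxx.
- move=> z x; rewrite !inE negb_or => /orP[]/eqP-> /andP[/andP[xu xA] xS].
    by apply: contra xA => eux; rewrite ?inE eux xS.
  by apply/negP => evx; move: xu; rewrite (Yleaf v x vY xS evx) eqxx.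
- move=> z; rewrite !inE => /orP[]/eqP->.
    apply: leq_trans (_ : #|[set v]| <= 1); last by rewrite cards1.
    apply: subset_leq_card; apply/subsetP => x; rewrite !inE => /andP[exu /orP[/eqP xu|->//]].
    by rewrite xu eirr in exu.
  apply: leq_trans (_ : #|[set u]| <= 1); last by rewrite cards1.
  apply: subset_leq_card; apply/subsetP => x; rewrite !inE => /andP[evx /orP[/eqP->|/eqP xv]].
    by [].
  by rewrite xv eirr in evx.
- rewrite cardsU1 uA cards2 uv /=; lia.
- by apply: IH; apply: smaller; rewrite !inE eqxx.
Qed.

End G.

Lemma diss_ub (T : finType) (e : rel T) m :
  (forall F, dissociation_set e F -> #|F| <= m) -> diss_number e <= m.
Proof. by move=> h; apply/bigmax_leqP. Qed.

Lemma diss_lb (T : finType) (e : rel T) F :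
  dissociation_set e F -> #|F| <= diss_number e.
Proof. by move=> h; apply: (leq_bigmax_cond (F := fun F : {set T} => #|F|)). Qed.

Lemma nedges_deg (T : finType) (e : rel T) :
  nedges e = (\sum_(x : T) deg e x) %/ 2.
Proof.
rewrite /nedges.
have -> : [set p : T * T | e p.1 p.2] = pairs e (fun p => p.1 \in [set: T]).
  by apply/setP => p; rewrite !inE andbT.
rewrite sum_pairs1; congr (_ %/ 2); apply: eq_bigl => x; by rewrite in_setT.
Qed.

Lemma part1 (T : finType) (e : rel T) : subcubic_tree e ->
     2 * #|T| <= 3 * diss_number e /\ 5 * diss_number e <= 4 * #|T| + 2.
Proof.
move=> [tr sc]; have [[esym eirr] [n0 [conn ned]]] := tr.
split.
  have [F [_ dF cF]] := lower esym eirr sc (tree_hered esym tr) setT.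
  rewrite cardsT in cF; have := diss_lb dF; lia.
have h : forall F, dissociation_set e F -> #|F| <= (4 * #|T| + 2) %/ 5.
  move=> F dF; have := upper esym dF sc.
  have -> : pairs e predT = [set p : T * T | e p.1 p.2].
    by apply/setP => p; rewrite !inE andbT.
  move: ned; rewrite /nedges => ned.
  have := cardsC F.
  rewrite leq_divRL //; lia.
have := diss_ub h; lia.
Qed.

Definition en (i j : nat) := (i.+1 == j) || (j.+1 == i).
Definition e3 : rel 'I_3 := fun i j => en i j.

Lemma e3_tree : subcubic_tree e3.
Proof.
have esym : symmetric e3 by move=> i j; rewrite /e3 /en orbC.
have eirr : irreflexive e3 by move=> i; rewrite /e3 /en orbb; apply/negbTE; lia.
have degE : forall x : 'I_3, deg e3 x = count (en x) (iota 0 3).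
  by move=> x; rewrite /deg /nbhd (card_I3 (en x)).
split; last by move=> x; apply: leq_trans (max_card _) _; rewrite card_ord.
split; first by [].
split; first by rewrite card_ord.
split.
  have m : 1 < 3 by [].
  move=> x y; apply: (@connect_trans _ e3 (Ordinal m)).
    case: (eqVneq (val x) 1) => h.
      by have -> : x = Ordinal m by apply: val_inj.
    apply: connect1; rewrite /e3 /en /=; case: x h => k kl /= h; lia.
  case: (eqVneq (val y) 1) => h.
    by have -> : y = Ordinal m by apply: val_inj.
  apply: connect1; rewrite /e3 /en /=; case: y h => k kl /= h; lia.
rewrite nedges_deg (eq_bigr (fun x : 'I_3 => count (en x) (iota 0 3))); last first.
  by move=> x _; rewrite degE.
by rewrite (s3 (fun k => count (en k) (iota 0 3))) card_ord.
Qed.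

Lemma e3_diss : diss_number e3 = 2.
Proof.
have h1 := (part1 e3_tree).1; rewrite card_ord in h1.
suff : diss_number e3 <= 2 by lia.
apply: diss_ub => F dF; rewrite leqNgt; apply/negP => F3.
have FT : F = setT.
  by apply/eqP; rewrite eqEcard subsetT cardsT card_ord.
have m : 1 < 3 by [].
have := forallP dF (Ordinal m); rewrite FT in_setT setIT /nbhd /e3.
by rewrite (card_I3 (en 1)).
Qed.

Definition e2 : rel bool := fun x y => x != y.

Lemma e2_deg x : deg e2 x = 1.
Proof.
rewrite /deg (_ : nbhd e2 x = [set ~~ x]) ?cards1 //.
by apply/setP => y; rewrite !inE /e2; case: x; case: y.
Qed.

Lemma e2_tree : subcubic_tree e2.
Proof.
split; last by move=> x; rewrite e2_deg.
split; first by split; [move=> x y; rewrite /e2 eq_sym | move=> x; rewrite /e2 eqxx].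
split; first by rewrite card_bool.
split.
  move=> x y; case: (eqVneq x y) => [->|h]; first exact: connect0.
  by apply: connect1.
rewrite nedges_deg (eq_bigr (fun _ => 1)); last by move=> x _; rewrite e2_deg.
by rewrite sum1_card card_bool.
Qed.

Lemma e2_diss : diss_number e2 = 2.
Proof.
apply/eqP; rewrite eqn_leq; apply/andP; split.
  by apply: diss_ub => F _; rewrite -card_bool; apply: max_card.
have : dissociation_set e2 setT.
  by apply/forallP => x; rewrite setIT in_setT /= -/(deg e2 x) e2_deg.
by move/diss_lb; rewrite cardsT card_bool.
Qed.

Theorem theorem2p4 :
  (forall (T : finType) (e : rel T), subcubic_tree e ->
     2 * #|T| <= 3 * diss_number e /\ 5 * diss_number e <= 4 * #|T| + 2)
  /\ (exists (T : finType) (e : rel T),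
        subcubic_tree e /\ 3 * diss_number e = 2 * #|T|)
  /\ (exists (T : finType) (e : rel T),
        subcubic_tree e /\ 5 * diss_number e = 4 * #|T| + 2).
Proof.
split; first exact: part1.
split.
  exists (ordinal 3), e3; split; first exact: e3_tree.
  by rewrite e3_diss card_ord.
exists bool, e2; split; first exact: e2_tree.
by rewrite e2_diss card_bool.
Qed.
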